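(* Assume $A$ is good. Then the set $\{w\in\Sigma: I^*(w)<\infty\}$ is countable. Consequently $A$ satisfies the countable condition: the set of all $w$ such that $(x,w)$ is an optimal pair for some $x\in\Sigma$ is countable.
   Context: $\Sigma=\{0,1\}^{\mathbb N}$, $\sigma$ the shift. $A^*$ is the Hölder dual potential of a Hölder $A$ via an involution kernel $W(w,x)$ ($A^*(w)=A(\tau_wx)+W(\sigma w,\tau_wx)-W(w,x)$, $\tau_w(x)=(w_0,x_0,x_1,\dots)$), normalized with $m(A)=m(A^* )=0$. $V^*$ is a calibrated subaction for $A^*$, $R^*(w)=V^*(\sigma w)-V^*(w)-A^*(w)\ge0$, $I^*(w)=\sum_{n\ge0}R^*(\sigma^nw)\in[0,\infty]$. Optimal pairs: with $V$ a calibrated subaction for $A$ and $W$ normalized so that $V(x)=\sup_w[W(w,x)-V^*(w)-I^*(w)]$, $(x,w)$ is optimal iff $V(x)=W(w,x)-V^*(w)-I^*(w)$. Assume the maximizing probability of $A^*$ is unique and supported on a periodic orbit $M$; $P=\{w\notin M:\sigma w\in M\}$; $A$ is good if $R^*>0$ on $P$. *)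

(* Defs.v *)
From Stdlib Require Import Reals Lra List.
Import ListNotations.
Open Scope R_scope.

(** The full shift Sigma = {0,1}^N, with 0 = false, 1 = true. *)
Definition Sigma := nat -> bool.

Definition shift (w : Sigma) : Sigma := fun i => w (S i).
Definition shiftn (k : nat) (w : Sigma) : Sigma := fun i => w (k + i)%nat.
Definition tau (w x : Sigma) : Sigma :=
  fun i => match i with O => w O | S j => x j end.
Definition cons_sym (a : bool) (y : Sigma) : Sigma :=
  fun i => match i with O => a | S j => y j end.

(** x and y agree on the first n coordinates, i.e. d(x,y) <= 2^{-n} for the
    standard metric d(x,y) = 2^{-min{k : x_k <> y_k}}. *)
Definition agree (n : nat) (x y : Sigma) : Prop :=
  forall k, (k < n)%nat -> x k = y k.

(** Hoelder continuity w.r.t. d: |f x - f y| <= C d(x,y)^alpha. *)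
Definition Holder (f : Sigma -> R) : Prop :=
  exists C alpha, 0 < alpha /\
    forall n x y, agree n x y -> Rabs (f x - f y) <= C * Rpower (/2) (INR n * alpha).

Definition continuous_S (f : Sigma -> R) : Prop :=
  forall x eps, 0 < eps -> exists n, forall y, agree n x y -> Rabs (f y - f x) < eps.

Definition involution_kernel (A Astar : Sigma -> R) (W : Sigma -> Sigma -> R) : Prop :=
  forall w x, Astar w = A (tau w x) + W (shift w) (tau w x) - W w x.

(** Calibrated subaction (for a normalized potential, m(f) = 0):
    V(y) = max_{sigma z = y} [ f(z) + V(z) ], V continuous. *)
Definition calibrated_subaction (f V : Sigma -> R) : Prop :=
  continuous_S V /\
  forall y, V y = Rmax (f (cons_sym false y) + V (cons_sym false y))
                        (f (cons_sym true y) + V (cons_sym true y)).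

(** Borel probability measures on Sigma, represented (Caratheodory /
    Kolmogorov) by their values on cylinder sets [s] = {z : z starts with s}. *)
Definition prefix (s : list bool) (z : Sigma) : Prop :=
  forall k, (k < length s)%nat -> nth k s false = z k.

Definition is_probability (nu : list bool -> R) : Prop :=
  nu [] = 1 /\ (forall s, 0 <= nu s) /\
  (forall s, nu s = nu (s ++ [false]) + nu (s ++ [true])).

(** sigma-invariance: nu(sigma^{-1}[s]) = nu([0s]) + nu([1s]) = nu([s]). *)
Definition is_invariant_prob (nu : list bool -> R) : Prop :=
  is_probability nu /\ (forall s, nu s = nu (false :: s) + nu (true :: s)).

Fixpoint words (n : nat) : list (list bool) :=
  match n with
  | O => [ [] ]
  | S m => flat_map (fun s => [s ++ [false]; s ++ [true]]) (words m)
  end.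

Definition ext (s : list bool) : Sigma := fun k => nth k s false.

(** Riemann sums over cylinders of length n; for continuous f they converge
    to the integral of f. *)
Definition riemann_sum (nu : list bool -> R) (f : Sigma -> R) (n : nat) : R :=
  fold_right Rplus 0 (map (fun s => nu s * f (ext s)) (words n)).

Definition integral_is (nu : list bool -> R) (f : Sigma -> R) (l : R) : Prop :=
  Un_cv (riemann_sum nu f) l.

Definition max_ergodic_value (f : Sigma -> R) (m : R) : Prop :=
  is_lub (fun l => exists nu, is_invariant_prob nu /\ integral_is nu f l) m.

Definition maximizing_prob (f : Sigma -> R) (m : R) (nu : list bool -> R) : Prop :=
  is_invariant_prob nu /\ integral_is nu f m.

Definition periodic (p : Sigma) (n : nat) : Prop :=
  (0 < n)%nat /\ forall i, shiftn n p i = p i.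
Definition in_orbit (p z : Sigma) : Prop := exists k, forall i, z i = shiftn k p i.

(** nu is supported on the set M: nu(Sigma \ M) = 0, i.e. every cylinder of
    positive measure meets (the closed set) M. *)
Definition supported_on (nu : list bool -> R) (M : Sigma -> Prop) : Prop :=
  forall s, 0 < nu s -> exists z, M z /\ prefix s z.

Definition Rstar (Astar Vstar : Sigma -> R) (w : Sigma) : R :=
  Vstar (shift w) - Vstar w - Astar w.

Definition Istar_is (Astar Vstar : Sigma -> R) (w : Sigma) (l : R) : Prop :=
  infinite_sum (fun n => Rstar Astar Vstar (shiftn n w)) l.

Definition Istar_finite (Astar Vstar : Sigma -> R) (w : Sigma) : Prop :=
  exists l, Istar_is Astar Vstar w l.

(** (x,w) optimal pair: V(x) = W(w,x) - V*(w) - I*(w) (forces I*(w) < oo). *)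
Definition optimal_pair (Astar V Vstar : Sigma -> R) (W : Sigma -> Sigma -> R)
  (x w : Sigma) : Prop :=
  exists l, Istar_is Astar Vstar w l /\ V x = W w x - Vstar w - l.

(** Normalization of W: V(x) = sup_w [W(w,x) - V*(w) - I*(w)]
    (terms with I*(w) = +oo contribute -oo and are omitted). *)
Definition W_normalized (Astar V Vstar : Sigma -> R) (W : Sigma -> Sigma -> R) : Prop :=
  forall x, is_lub (fun r => exists w l, Istar_is Astar Vstar w l /\
                                         r = W w x - Vstar w - l) (V x).

Definition countable_set (S : Sigma -> Prop) : Prop :=
  exists f : nat -> Sigma, forall w, S w -> exists n, f n = w.

(* Main.v *)
Require Import Defs.
From Stdlib Require Import Reals List.
From Stdlib Require Import Lra Lia Classical ClassicalEpsilon FunctionalExtensionality Arith Cantor PArith Rtopology.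
Import ListNotations.
Open Scope R_scope.

Definition take (n : nat) (z : Sigma) : list bool := map z (seq 0 n).

Lemma take_length n z : length (take n z) = n.
Proof. unfold take. rewrite length_map, length_seq. reflexivity. Qed.

Lemma take_nth n z k : (k < n)%nat -> nth k (take n z) false = z k.
Proof.
  intros Hk. unfold take.
  rewrite (nth_indep _ false (z 0%nat)) by (rewrite length_map, length_seq; lia).
  rewrite map_nth, seq_nth by lia. reflexivity.
Qed.

Lemma take_S n z : take (S n) z = take n z ++ [z n].
Proof. unfold take. rewrite seq_S, map_app. reflexivity. Qed.

Lemma prefix_take n z q : prefix (take n z) q <-> agree n z q.
Proof.
  unfold prefix, agree. rewrite take_length. split; intros H k Hk.
  - rewrite <- (take_nth n z k Hk). apply H; auto.
  - rewrite take_nth by auto. apply H; auto.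
Qed.

Lemma shift_shiftn i w : shift (shiftn i w) = shiftn (S i) w.
Proof. apply functional_extensionality; intro j. unfold shift, shiftn. f_equal. lia. Qed.

Lemma shiftn_shiftn i j w : shiftn i (shiftn j w) = shiftn (j + i) w.
Proof. apply functional_extensionality; intro k. unfold shiftn. f_equal. lia. Qed.

Lemma shiftn_0 w : shiftn 0 w = w.
Proof. apply functional_extensionality; intro k. reflexivity. Qed.

Lemma cons_shift w : cons_sym (w 0%nat) (shift w) = w.
Proof. apply functional_extensionality; intros [|k]; reflexivity. Qed.

Lemma shift_cons b y : shift (cons_sym b y) = y.
Proof. apply functional_extensionality; intros k; reflexivity. Qed.

Fixpoint pl (p : positive) : list bool :=
  match p with xH => [] | xO q => false :: pl q | xI q => true :: pl q end.
Fixpoint lp (l : list bool) : positive :=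
  match l with [] => xH | false :: t => xO (lp t) | true :: t => xI (lp t) end.
Lemma pl_lp l : pl (lp l) = l.
Proof. induction l as [|[|] t IH]; simpl; congruence. Qed.

Definition enum_list (n : nat) : list bool := pl (Pos.of_succ_nat n).
Lemma enum_list_surj l : exists n, enum_list n = l.
Proof.
  exists (pred (Pos.to_nat (lp l))). unfold enum_list.
  rewrite (SuccNat2Pos.inv _ (lp l)). apply pl_lp.
  pose proof (Pos2Nat.is_pos (lp l)). lia.
Qed.

Definition app_seq (s : list bool) (y : Sigma) : Sigma :=
  fun i => if Nat.ltb i (length s) then nth i s false else y (i - length s)%nat.

Lemma app_seq_take N w : app_seq (take N w) (shiftn N w) = w.
Proof.
  apply functional_extensionality; intro i. unfold app_seq. rewrite take_length.
  destruct (Nat.ltb_spec i N).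
  - apply take_nth; auto.
  - unfold shiftn. f_equal. lia.
Qed.

Lemma countable_eventually (p : Sigma) (per : nat) (S : Sigma -> Prop) :
  (forall i, shiftn per p i = p i) ->
  (forall w, S w -> exists N a, shiftn N w = shiftn a p) ->
  countable_set S.
Proof.
  intros _ H.
  exists (fun n => let (a, b) := Cantor.of_nat n in app_seq (enum_list a) (shiftn b p)).
  intros w Hw. destruct (H w Hw) as (N & a & HN).
  destruct (enum_list_surj (take N w)) as [m Hm].
  exists (Cantor.to_nat (m, a)). rewrite Cantor.cancel_of_to. rewrite Hm, <- HN.
  apply app_seq_take.
Qed.

Lemma orbit_eq p q : in_orbit p q -> exists a, q = shiftn a p.
Proof. intros [a H]. exists a. apply functional_extensionality; auto. Qed.

Lemma orbit_of a p : in_orbit p (shiftn a p).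
Proof. exists a. reflexivity. Qed.

Lemma orbit_shift p q : in_orbit p q -> in_orbit p (shift q).
Proof. intros H. destruct (orbit_eq _ _ H) as [a ->]. rewrite shift_shiftn. apply orbit_of. Qed.

Lemma orbit_period p per q : periodic p per -> in_orbit p q -> forall i, q (per + i)%nat = q i.
Proof.
  intros [Hpos Hp] Hq i. destruct (orbit_eq _ _ Hq) as [a ->]. unfold shiftn.
  replace (a + (per + i))%nat with (per + (a + i))%nat by lia.
  apply (Hp (a+i)%nat).
Qed.

Lemma orbit_mod p per q : periodic p per -> in_orbit p q -> exists a, (a < per)%nat /\ q = shiftn a p.
Proof.
  intros Hper Hq. destruct (orbit_eq _ _ Hq) as [a ->].
  exists (a mod per)%nat. destruct Hper as [Hpos Hp]. split.
  - apply Nat.mod_upper_bound. lia.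
  - apply functional_extensionality; intro i. unfold shiftn.
    rewrite (Nat.div_mod_eq a per) at 1.
    generalize (a / per)%nat as m. intro m. induction m.
    + f_equal. lia.
    + rewrite <- IHm. replace (per * S m + a mod per + i)%nat with (per + (per * m + a mod per + i))%nat by lia.
      apply Hp.
Qed.

Lemma agree_orbit_eq p per q1 q2 : periodic p per -> in_orbit p q1 -> in_orbit p q2 ->
  agree per q1 q2 -> q1 = q2.
Proof.
  intros Hper H1 H2 Hag. apply functional_extensionality.
  intro i. induction i as [i IH] using lt_wf_ind.
  destruct (Nat.lt_ge_cases i per) as [Hi|Hi].
  - apply Hag; auto.
  - destruct Hper as [Hpos Hp].
    replace i with (per + (i - per))%nat by lia.
    rewrite (orbit_period p per q1 (conj Hpos Hp) H1), (orbit_period p per q2 (conj Hpos Hp) H2).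
    apply IH. lia.
Qed.

Definition U (p : Sigma) (k : nat) (z : Sigma) : Prop :=
  exists q, in_orbit p q /\ agree k z q.

Lemma shadow p per k : periodic p per -> (per < k)%nat ->
  forall L z q, in_orbit p q -> agree k z q ->
  (forall i, (i <= L)%nat -> U p k (shiftn i z)) -> agree (L + k) z q.
Proof.
  intros Hper Hk L. induction L as [|L IH]; intros z q Hq Hzq HU.
  - simpl. auto.
  - destruct (HU 1%nat ltac:(lia)) as [q' [Hq' Hzq']].
    assert (Hs : shift q = q').
    { apply (agree_orbit_eq p per); auto. apply orbit_shift; auto.
      intros j Hj. specialize (Hzq (S j) ltac:(lia)). specialize (Hzq' j ltac:(lia)).
      unfold shiftn in Hzq'. simpl in Hzq'. unfold shift. congruence. }
    assert (IH' : agree (L + k) (shift z) (shift q)).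
    { apply IH.
      - apply orbit_shift; auto.
      - rewrite Hs. intros j Hj. rewrite <- (Hzq' j Hj). reflexivity.
      - intros i Hi. specialize (HU (S i) ltac:(lia)).
        replace (shiftn i (shift z)) with (shiftn (S i) z); auto. }
    intros [|j] Hj.
    + apply Hzq. lia.
    + apply (IH' j). lia.
Qed.

Lemma eventually_U_orbit p per k w N : periodic p per -> (per < k)%nat ->
  (forall i, (N <= i)%nat -> U p k (shiftn i w)) -> in_orbit p (shiftn N w).
Proof.
  intros Hper Hk H.
  destruct (H N (le_n _)) as [q [Hq Hag]].
  replace (shiftn N w) with q. { exact Hq. }
  symmetry. apply functional_extensionality; intro i.
  apply (shadow p per k Hper Hk i (shiftn N w) q Hq Hag).
  - intros j _. rewrite shiftn_shiftn. apply H. lia.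
  - lia.
Qed.

Lemma agree_sym n x y : agree n x y -> agree n y x.
Proof. intros H k Hk. symmetry; auto. Qed.
Lemma agree_mono n m x y : (m <= n)%nat -> agree n x y -> agree m x y.
Proof. intros Hm H k Hk. apply H. lia. Qed.
Lemma agree_shift n x y : agree (S n) x y -> agree n (shift x) (shift y).
Proof. intros H k Hk. apply (H (S k)). lia. Qed.

Lemma half_pow_lt a : 0 < a -> 0 < Rpower (/2) a < 1.
Proof.
  intros Ha. unfold Rpower. split. apply exp_pos.
  rewrite <- exp_0. apply exp_increasing.
  rewrite ln_Rinv by lra.
  assert (0 < ln 2). { rewrite <- ln_1. apply ln_increasing; lra. }
  nra.
Qed.

Lemma holder_eps f : Holder f -> forall eps, 0 < eps ->
  exists n, forall m x y, (n <= m)%nat -> agree m x y -> Rabs (f x - f y) < eps.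
Proof.
  intros [C [al [Hal H]]] eps Heps.
  set (r := Rpower (/2) al). assert (Hr := half_pow_lt al Hal). fold r in Hr.
  assert (HC : 0 < Rabs C + 1) by (pose proof (Rabs_pos C); lra).
  assert (Hr1 : Rabs r < 1) by (rewrite Rabs_right; lra).
  assert (He' : 0 < eps / (Rabs C + 1)) by (apply Rdiv_lt_0_compat; lra).
  destruct (pow_lt_1_zero r Hr1 (eps / (Rabs C + 1)) He') as [N HN].
  exists N. intros m x y Hm Hag. specialize (H m x y Hag).
  assert (E : Rpower (/2) (INR m * al) = r ^ m).
  { unfold r. rewrite <- Rpower_pow by (exact (proj1 Hr)). rewrite Rpower_mult. f_equal. ring. }
  rewrite E in H. specialize (HN m Hm).
  assert (0 <= r ^ m) by (apply pow_le; lra).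
  rewrite Rabs_right in HN by lra.
  assert (C * r ^ m <= Rabs C * r ^ m) by (apply Rmult_le_compat_r; [lra| apply Rle_abs]).
  assert (Rabs C * r ^ m <= Rabs C * (eps / (Rabs C + 1))).
  { apply Rmult_le_compat_l; [apply Rabs_pos|lra]. }
  assert (Rabs C * (eps / (Rabs C + 1)) < eps).
  { unfold Rdiv. rewrite <- Rmult_assoc. apply (Rmult_lt_reg_r (Rabs C + 1)); auto.
    rewrite Rmult_assoc, Rinv_l by lra. nra. }
  lra.
Qed.

Lemma holder_cont f : Holder f -> continuous_S f.
Proof.
  intros Hf x eps Heps. destruct (holder_eps f Hf eps Heps) as [n Hn].
  exists n. intros y Hy. rewrite Rabs_minus_sym. apply (Hn n x y); auto.
Qed.

Lemma prefix_app1 s b x : prefix s x -> x (length s) = b -> prefix (s ++ [b]) x.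
Proof.
  intros H Hb k Hk. rewrite length_app in Hk. simpl in Hk.
  destruct (Nat.lt_ge_cases k (length s)).
  - rewrite app_nth1 by auto. apply H; auto.
  - assert (k = length s) by lia. subst. rewrite app_nth2 by lia.
    rewrite Nat.sub_diag. simpl. auto.
Qed.

Lemma prefix_app1_inv s b x : prefix (s ++ [b]) x -> prefix s x /\ x (length s) = b.
Proof.
  intros H. split.
  - intros k Hk. rewrite <- (H k). rewrite app_nth1; auto. rewrite length_app; simpl; lia.
  - rewrite <- (H (length s)). rewrite app_nth2 by lia. rewrite Nat.sub_diag. reflexivity.
    rewrite length_app; simpl; lia.
Qed.

Definition unb (f : Sigma -> R) (s : list bool) : Prop :=
  forall B, exists x, prefix s x /\ B < Rabs (f x).

Lemma unb_split f s : unb f s -> unb f (s ++ [false]) \/ unb f (s ++ [true]).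
Proof.
  intros H. apply NNPP. intros Hn. apply not_or_and in Hn. destruct Hn as [H1 H2].
  unfold unb in H1, H2.
  apply not_all_ex_not in H1. destruct H1 as [B1 H1].
  apply not_all_ex_not in H2. destruct H2 as [B2 H2].
  destruct (H (Rmax B1 B2)) as [x [Hx HB]].
  destruct (x (length s)) eqn:E.
  - apply H2. exists x. split. apply prefix_app1; auto.
    pose proof (Rmax_r B1 B2). lra.
  - apply H1. exists x. split. apply prefix_app1; auto.
    pose proof (Rmax_l B1 B2). lra.
Qed.

Fixpoint build (f : Sigma -> R) (n : nat) : list bool :=
  match n with
  | O => []
  | S m => let s := build f m in
           if excluded_middle_informative (unb f (s ++ [false])) then s ++ [false] else s ++ [true]
  end.

Lemma build_unb f n : unb f [] -> unb f (build f n).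
Proof.
  intros H0. induction n; simpl; auto.
  destruct (excluded_middle_informative _); auto.
  destruct (unb_split f _ IHn); tauto.
Qed.

Lemma build_length f n : length (build f n) = n.
Proof.
  induction n; simpl; auto. destruct (excluded_middle_informative _);
  rewrite length_app; simpl; lia.
Qed.

Lemma build_ext f m j : exists t, build f (m + j) = build f m ++ t.
Proof.
  induction j.
  - exists []. rewrite Nat.add_0_r, app_nil_r. auto.
  - destruct IHj as [t Ht]. rewrite Nat.add_succ_r. simpl.
    destruct (excluded_middle_informative _); rewrite Ht; rewrite <- app_assoc; eexists; eauto.
Qed.

Lemma cont_bounded f : continuous_S f -> exists B, forall x, Rabs (f x) <= B.
Proof.
  intros Hf. apply NNPP. intros Hn.
  assert (H0 : unb f []).
  { intros B. apply NNPP. intros HB. apply Hn. exists B. intros x.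
    apply Rnot_lt_le. intros Hx. apply HB. exists x. split; auto.
    intros k Hk. simpl in Hk. lia. }
  set (z := fun k => nth k (build f (S k)) false).
  assert (Hz : forall n, prefix (build f n) z).
  { intros n k Hk. rewrite build_length in Hk. unfold z.
    destruct (build_ext f (S k) (n - S k)) as [t Ht].
    replace (S k + (n - S k))%nat with n in Ht by lia. rewrite Ht.
    rewrite app_nth1; auto. rewrite build_length. lia. }
  destruct (Hf z 1 ltac:(lra)) as [n Hn'].
  destruct (build_unb f n H0 (Rabs (f z) + 1)) as [x [Hx Hb]].
  assert (Hag : agree n z x).
  { intros k Hk. rewrite <- (Hz n k); [| rewrite build_length; auto].
    apply Hx. rewrite build_length; auto. }
  specialize (Hn' x Hag).
  pose proof (Rabs_triang_inv (f x) (f z)). lra.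
Qed.

Lemma holder_bounded f : Holder f -> exists B, forall x, Rabs (f x) <= B.
Proof. intros H. apply cont_bounded, holder_cont, H. Qed.

Lemma Rstar_nonneg Astar Vstar : calibrated_subaction Astar Vstar ->
  forall w, 0 <= Rstar Astar Vstar w.
Proof.
  intros [_ H] w. unfold Rstar. specialize (H (shift w)).
  rewrite <- (cons_shift w) at 2 3.
  destruct (w 0%nat); rewrite H; [pose proof (Rmax_r (Astar (cons_sym false (shift w)) + Vstar (cons_sym false (shift w))) (Astar (cons_sym true (shift w)) + Vstar (cons_sym true (shift w))))
   | pose proof (Rmax_l (Astar (cons_sym false (shift w)) + Vstar (cons_sym false (shift w))) (Astar (cons_sym true (shift w)) + Vstar (cons_sym true (shift w))))]; lra.
Qed.

Lemma Rstar_cont Astar Vstar : Holder Astar -> continuous_S Vstar ->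
  forall x eps, 0 < eps -> exists n, forall z, agree n z x ->
    Rabs (Rstar Astar Vstar z - Rstar Astar Vstar x) < eps.
Proof.
  intros HA HV x eps He.
  destruct (HV (shift x) (eps/3) ltac:(lra)) as [n1 H1].
  destruct (HV x (eps/3) ltac:(lra)) as [n2 H2].
  destruct (holder_eps Astar HA (eps/3) ltac:(lra)) as [n3 H3].
  exists (S n1 + n2 + n3)%nat. intros z Hz.
  specialize (H1 (shift z) (agree_shift _ _ _ (agree_sym _ _ _ (agree_mono (S n1 + n2 + n3) (S n1) _ _ ltac:(lia) Hz)))).
  specialize (H2 z (agree_sym _ _ _ (agree_mono (S n1 + n2 + n3) n2 _ _ ltac:(lia) Hz))).
  specialize (H3 (S n1 + n2 + n3)%nat z x ltac:(lia) Hz).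
  unfold Rstar. apply Rabs_def2 in H1. apply Rabs_def2 in H2. apply Rabs_def2 in H3.
  apply Rabs_def1; lra.
Qed.

Definition sumL {A} (l : list A) (g : A -> R) : R := fold_right Rplus 0 (map g l).
Fixpoint sumN (N : nat) (h : nat -> R) : R :=
  match N with O => 0 | S n => sumN n h + h n end.
Definition indP (P : Prop) : R := if excluded_middle_informative P then 1 else 0.

Lemma indP_true (P : Prop) : P -> indP P = 1.
Proof. intros H. unfold indP. destruct (excluded_middle_informative P); tauto. Qed.
Lemma indP_false (P : Prop) : ~ P -> indP P = 0.
Proof. intros H. unfold indP. destruct (excluded_middle_informative P); tauto. Qed.
Lemma indP_01 P : 0 <= indP P <= 1.
Proof. unfold indP. destruct (excluded_middle_informative P); lra. Qed.
Lemma indP_iff (P Q : Prop) : (P <-> Q) -> indP P = indP Q.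
Proof. intros H. unfold indP. destruct (excluded_middle_informative P), (excluded_middle_informative Q); tauto. Qed.
Lemma indP_and P Q : indP (P /\ Q) = indP P * indP Q.
Proof. unfold indP. destruct (excluded_middle_informative P), (excluded_middle_informative Q),
  (excluded_middle_informative (P /\ Q)); try tauto; lra. Qed.

Lemma sumL_cons {A} (x : A) l g : sumL (x :: l) g = g x + sumL l g.
Proof. reflexivity. Qed.
Lemma sumL_nil {A} g : sumL (@nil A) g = 0.
Proof. reflexivity. Qed.

Lemma sumL_ext_in {A} (l : list A) g h : (forall x, In x l -> g x = h x) -> sumL l g = sumL l h.
Proof.
  induction l; intros H; simpl; auto. unfold sumL in *; simpl. rewrite H by (left; auto).
  rewrite IHl; auto. intros; apply H; right; auto.
Qed.
Lemma sumL_plus {A} (l : list A) g h : sumL l (fun x => g x + h x) = sumL l g + sumL l h.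
Proof. induction l; unfold sumL in *; simpl; try rewrite IHl; lra. Qed.
Lemma sumL_scal {A} (l : list A) c g : sumL l (fun x => c * g x) = c * sumL l g.
Proof. induction l; unfold sumL in *; simpl; try rewrite IHl; lra. Qed.
Lemma sumL_flat2 {A B} (l : list A) (a b : A -> B) g :
  sumL (flat_map (fun s => [a s; b s]) l) g = sumL l (fun s => g (a s) + g (b s)).
Proof. induction l; unfold sumL in *; simpl; try rewrite IHl; lra. Qed.
Lemma sumL_nonneg {A} (l : list A) g : (forall x, In x l -> 0 <= g x) -> 0 <= sumL l g.
Proof.
  induction l; intros H; unfold sumL in *; simpl. lra.
  pose proof (H a (or_introl eq_refl)). pose proof (IHl (fun x Hx => H x (or_intror Hx))). lra.
Qed.
Lemma sumL_pos_exists {A} (l : list A) g : 0 < sumL l g -> exists x, In x l /\ 0 < g x.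
Proof.
  induction l; unfold sumL in *; simpl; intros H. lra.
  destruct (Rlt_dec 0 (g a)). exists a; auto.
  destruct IHl as [x [Hx Hg]]. lra. exists x; auto.
Qed.
Lemma sumL_cv {A} (l : list A) (a : nat -> A -> R) (b : A -> R) :
  (forall s, In s l -> Un_cv (fun j => a j s) (b s)) ->
  Un_cv (fun j => sumL l (a j)) (sumL l b).
Proof.
  induction l; intros H; unfold sumL in *; simpl.
  - intros eps He. exists 0%nat. intros. unfold Rdist. rewrite Rminus_0_r, Rabs_R0. lra.
  - apply CV_plus. apply H; left; reflexivity. apply IHl. intros; apply H; right; auto.
Qed.

Lemma sumN_ext N h g : (forall i, (i < N)%nat -> h i = g i) -> sumN N h = sumN N g.
Proof. induction N; intros H; simpl; auto. rewrite IHN, H; auto. Qed.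
Lemma sumN_plus N h g : sumN N (fun i => h i + g i) = sumN N h + sumN N g.
Proof. induction N; simpl; try rewrite IHN; lra. Qed.
Lemma sumN_minus N h g : sumN N (fun i => h i - g i) = sumN N h - sumN N g.
Proof. induction N; simpl; try rewrite IHN; lra. Qed.
Lemma sumN_scal N c h : sumN N (fun i => c * h i) = c * sumN N h.
Proof. induction N; simpl; try rewrite IHN; lra. Qed.
Lemma sumN_const N c : sumN N (fun _ => c) = INR N * c.
Proof. induction N; simpl sumN; try rewrite IHN; rewrite ?S_INR; simpl; lra. Qed.
Lemma sumN_shift N h : sumN (S N) h = h 0%nat + sumN N (fun i => h (S i)).
Proof. induction N; simpl in *; try rewrite IHN; lra. Qed.
Lemma sumN_nonneg N h : (forall i, 0 <= h i) -> 0 <= sumN N h.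
Proof. induction N; simpl; intros H; auto. lra. pose proof (H N); pose proof (IHN H); lra. Qed.
Lemma sumN_le N h g : (forall i, h i <= g i) -> sumN N h <= sumN N g.
Proof. induction N; simpl; intros H; auto. lra. pose proof (H N); pose proof (IHN H); lra. Qed.
Lemma sumN_mono N M h : (forall i, 0 <= h i) -> (N <= M)%nat -> sumN N h <= sumN M h.
Proof.
  intros H HNM. induction HNM. lra. simpl. pose proof (H m). lra.
Qed.
Lemma sumN_f_R0 n h : sumN (S n) h = sum_f_R0 h n.
Proof. induction n; simpl in *; auto. lra. rewrite <- IHn. simpl. lra. Qed.
Lemma sumN_telescope N h : sumN N (fun i => h (S i) - h i) = h N - h 0%nat.
Proof. induction N; simpl; try rewrite IHN; lra. Qed.

Lemma sumL_sumN {A} (l : list A) N (H : nat -> A -> R) :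
  sumL l (fun s => sumN N (fun i => H i s)) = sumN N (fun i => sumL l (H i)).
Proof.
  induction l; unfold sumL in *; simpl.
  - induction N; simpl; auto. rewrite <- IHN. lra.
  - rewrite IHl. rewrite <- sumN_plus. reflexivity.
Qed.

Lemma words_length n s : In s (words n) -> length s = n.
Proof.
  revert s. induction n; simpl; intros s Hs.
  - destruct Hs as [<-|[]]; auto.
  - apply in_flat_map in Hs. destruct Hs as [t [Ht Hs]].
    simpl in Hs. destruct Hs as [<-|[<-|[]]]; rewrite length_app; simpl; rewrite IHn; auto; lia.
Qed.

Lemma indP_prefix_app s b z : indP (prefix (s ++ [b]) z) = indP (prefix s z) * indP (z (length s) = b).
Proof.
  rewrite <- indP_and. apply indP_iff. split.
  - apply prefix_app1_inv.
  - intros [H1 H2]. apply prefix_app1; auto.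
Qed.

Lemma key_sum n z (g : list bool -> R) :
  sumL (words n) (fun s => indP (prefix s z) * g s) = g (take n z).
Proof.
  revert g. induction n; intros g.
  - simpl. unfold sumL; simpl. rewrite indP_true. unfold take; simpl. lra.
    intros k Hk; simpl in Hk; lia.
  - simpl words. rewrite sumL_flat2.
    rewrite (sumL_ext_in _ _ (fun s => indP (prefix s z) * g (s ++ [z n]))).
    + rewrite IHn. rewrite take_S. reflexivity.
    + intros s Hs. rewrite !indP_prefix_app. rewrite (words_length n s Hs).
      destruct (z n) eqn:E.
      * rewrite (indP_false (true = false)) by congruence. rewrite (indP_true (true = true)) by auto. lra.
      * rewrite (indP_false (false = true)) by congruence. rewrite (indP_true (false = false)) by auto. lra.
Qed.

Lemma indP_prefix_split s z : indP (prefix s z) = indP (prefix (s ++ [false]) z) + indP (prefix (s ++ [true]) z).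
Proof.
  rewrite !indP_prefix_app. destruct (z (length s)) eqn:E.
  - rewrite (indP_false (true = false)) by congruence. rewrite (indP_true (true = true)) by auto. lra.
  - rewrite (indP_false (false = true)) by congruence. rewrite (indP_true (false = false)) by auto. lra.
Qed.

Lemma indP_prefix_cons s z : indP (prefix (false :: s) z) + indP (prefix (true :: s) z) = indP (prefix s (shift z)).
Proof.
  assert (E : forall b, indP (prefix (b :: s) z) = indP (z 0%nat = b) * indP (prefix s (shift z))).
  { intros b. rewrite <- indP_and. apply indP_iff. split.
    - intros H. split. symmetry. apply (H 0%nat). simpl; lia.
      intros k Hk. apply (H (S k)). simpl; lia.
    - intros [H1 H2] [|k] Hk; simpl. auto. apply H2. simpl in Hk; lia. }
  rewrite !E. destruct (z 0%nat) eqn:Ez.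
  - rewrite (indP_false (true = false)) by congruence. rewrite (indP_true (true = true)) by auto. lra.
  - rewrite (indP_false (false = true)) by congruence. rewrite (indP_true (false = false)) by auto. lra.
Qed.

Definition SI (f : nat -> nat) : Prop := forall n, (f n < f (S n))%nat.

Lemma SI_ge f : SI f -> forall n, (n <= f n)%nat.
Proof. intros H n. induction n. lia. specialize (H n). lia. Qed.
Lemma SI_mono f : SI f -> forall a b, (a <= b)%nat -> (f a <= f b)%nat.
Proof. intros H a b Hab. induction Hab. lia. specialize (H m). lia. Qed.
Lemma SI_comp f g : SI f -> SI g -> SI (fun n => f (g n)).
Proof.
  intros Hf Hg n. assert (S (g n) <= g (S n))%nat by (apply Hg).
  pose proof (SI_mono f Hf _ _ H). specialize (Hf (g n)). lia.
Qed.

Lemma small_inv eps : 0 < eps -> exists N, forall n, (N <= n)%nat -> / (INR n + 1) < eps.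
Proof.
  intros He. destruct (INR_archimed eps 1 He) as [N HN]. exists N. intros n Hn.
  apply le_INR in Hn. pose proof (pos_INR N).
  apply (Rmult_lt_reg_r (INR n + 1)). lra. rewrite Rinv_l by lra. nra.
Qed.

Lemma BW_sub (v : nat -> R) : exists psi, SI psi /\
  ((forall n, 0 <= v n <= 1) -> exists l, Un_cv (fun n => v (psi n)) l).
Proof.
  destruct (classic (forall n, 0 <= v n <= 1)) as [Hb|Hb].
  2:{ exists (fun n => n). split. intros n; lia. tauto. }
  destruct (Bolzano_Weierstrass v _ (compact_P3 0 1) Hb) as [l Hl].
  assert (Hsel : forall N n, exists p, (N <= p)%nat /\ Rabs (v p - l) < / (INR n + 1)).
  { intros N n. assert (Hpos : 0 < / (INR n + 1)).
    { apply Rinv_0_lt_compat. pose proof (pos_INR n). lra. }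
    destruct (Hl (disc l (mkposreal _ Hpos)) N) as [p [Hp Hv]].
    - exists (mkposreal _ Hpos). intros x Hx. exact Hx.
    - exists p. split; auto. }
  set (sel := fun N n => proj1_sig (constructive_indefinite_description _ (Hsel N n))).
  assert (selP : forall N n, (N <= sel N n)%nat /\ Rabs (v (sel N n) - l) < / (INR n + 1)).
  { intros N n. unfold sel. destruct (constructive_indefinite_description _ _). simpl. auto. }
  set (psi := fix psi n := match n with O => sel 0%nat 0%nat | S m => sel (S (psi m)) (S m) end).
  exists psi. split.
  - intros n. simpl. destruct (selP (S (psi n)) (S n)). lia.
  - intros _. exists l. intros eps He. destruct (small_inv eps He) as [N HN].
    exists N. intros n Hn. unfold Rdist.
    assert (Rabs (v (psi n) - l) < / (INR n + 1)).
    { destruct n; simpl; apply selP. }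
    specialize (HN n Hn). lra.
Qed.

Lemma diag (u : nat -> list bool -> R) : (forall j s, 0 <= u j s <= 1) ->
  exists D : nat -> nat, (forall j, (j <= D j)%nat) /\ forall s, exists l, Un_cv (fun j => u (D j) s) l.
Proof.
  intros Hu.
  set (sel := fun v => proj1_sig (constructive_indefinite_description _ (BW_sub v))).
  assert (selP : forall v, SI (sel v) /\ ((forall n, 0 <= v n <= 1) -> exists l, Un_cv (fun n => v (sel v n)) l)).
  { intros v. unfold sel. destruct (constructive_indefinite_description _ _). simpl. auto. }
  set (Phi := fix Phi m := match m with
          | O => sel (fun j => u j (enum_list 0))
          | S m' => fun j => Phi m' (sel (fun i => u (Phi m' i) (enum_list (S m'))) j) end).
  assert (PhiSI : forall m, SI (Phi m)).
  { induction m; simpl. apply selP. apply SI_comp; auto. apply selP. }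
  assert (PhiCv : forall m, exists l, Un_cv (fun j => u (Phi m j) (enum_list m)) l).
  { destruct m; simpl.
    - apply (proj2 (selP (fun j => u j (enum_list 0)))); intros; apply Hu.
    - apply (proj2 (selP (fun i => u (Phi m i) (enum_list (S m))))); intros; apply Hu. }
  assert (PhiSub : forall m d, exists chi, SI chi /\ forall i, Phi (m + d)%nat i = Phi m (chi i)).
  { intros m d. induction d.
    - exists (fun i => i). split. intros n; lia. intros i. rewrite Nat.add_0_r. auto.
    - destruct IHd as [chi [Hchi He]].
      exists (fun i => chi (sel (fun i => u (Phi (m + d)%nat i) (enum_list (S (m + d)))) i)).
      split. apply SI_comp; auto. apply selP.
      intros i. rewrite Nat.add_succ_r. simpl. rewrite He. reflexivity. }
  exists (fun j => Phi j j). split.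
  - intros j. apply SI_ge, PhiSI.
  - intros s. destruct (enum_list_surj s) as [m <-].
    destruct (PhiCv m) as [l Hl]. exists l. intros eps He.
    destruct (Hl eps He) as [N HN]. exists (N + m)%nat. intros j Hj.
    destruct (PhiSub m (j - m)%nat) as [chi [Hchi Hc]].
    replace (m + (j - m))%nat with j in Hc by lia. rewrite Hc.
    apply HN. pose proof (SI_ge chi Hchi j). lia.
Qed.

Lemma Rabs_le_inv a b : Rabs a <= b -> - b <= a <= b.
Proof. intros H. split_Rabs; lra. Qed.

Lemma cv_const c : Un_cv (fun _ => c) c.
Proof. intros eps He. exists 0%nat. intros. unfold Rdist. rewrite Rminus_diag, Rabs_R0. lra. Qed.

Lemma lim_le a b la lb : Un_cv a la -> Un_cv b lb -> (forall j, a j <= b j) -> la <= lb.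
Proof.
  intros Ha Hb H. apply Rnot_lt_le. intros Hlt.
  destruct (Ha ((la - lb)/2) ltac:(lra)) as [N1 H1].
  destruct (Hb ((la - lb)/2) ltac:(lra)) as [N2 H2].
  specialize (H1 (N1 + N2)%nat ltac:(lia)). specialize (H2 (N1 + N2)%nat ltac:(lia)).
  specialize (H (N1 + N2)%nat). unfold Rdist in *.
  apply Rabs_def2 in H1. apply Rabs_def2 in H2. lra.
Qed.

Lemma lim_bound a b la lb c : Un_cv a la -> Un_cv b lb -> (forall j, Rabs (a j - b j) <= c) ->
  Rabs (la - lb) <= c.
Proof.
  intros Ha Hb H. pose proof (CV_minus _ _ _ _ Ha Hb) as Hd.
  apply Rabs_le. split.
  - apply (lim_le (fun _ => - c) _ _ _ (cv_const _) Hd). intros j. specialize (H j).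
    apply Rabs_le_inv in H. lra.
  - apply (lim_le _ (fun _ => c) _ _ Hd (cv_const _)). intros j. specialize (H j).
    apply Rabs_le_inv in H. lra.
Qed.

Lemma cv_inv_N (D : nat -> nat) (M : nat) : (forall j, (j <= D j)%nat) ->
  Un_cv (fun j => / INR (D j + M + 1)) 0.
Proof.
  intros HD eps He. destruct (small_inv eps He) as [N HN]. exists N. intros j Hj.
  unfold Rdist. rewrite Rminus_0_r.
  assert (H1 : INR j + 1 <= INR (D j + M + 1)).
  { rewrite <- S_INR. apply le_INR. specialize (HD j). lia. }
  pose proof (pos_INR j).
  rewrite Rabs_right. 2:{ apply Rle_ge, Rlt_le, Rinv_0_lt_compat. lra. }
  specialize (HN j Hj). apply Rle_lt_trans with (/ (INR j + 1)); auto.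
  apply Rinv_le_contravar; lra.
Qed.

Lemma cv_scale_inv (D : nat -> nat) (M : nat) (x : nat -> R) K : (forall j, (j <= D j)%nat) ->
  (forall j, Rabs (x j) <= K) -> Un_cv (fun j => / INR (D j + M + 1) * x j) 0.
Proof.
  intros HD Hx. pose proof (cv_inv_N D M HD) as H.
  intros eps He. assert (HK : 0 <= K) by (pose proof (Hx 0%nat); pose proof (Rabs_pos (x 0%nat)); lra).
  destruct (H (eps / (K + 1))) as [N HN]. { apply Rdiv_lt_0_compat; lra. }
  exists N. intros j Hj. specialize (HN j Hj). unfold Rdist in *. rewrite Rminus_0_r in *.
  rewrite Rabs_mult. specialize (Hx j).
  assert (Rabs (/ INR (D j + M + 1)) * Rabs (x j) <= Rabs (/ INR (D j + M + 1)) * K)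
    by (apply Rmult_le_compat_l; auto; apply Rabs_pos).
  assert (Rabs (/ INR (D j + M + 1)) * K <= eps / (K + 1) * K)
    by (apply Rmult_le_compat_r; lra).
  assert (eps / (K + 1) * K < eps).
  { unfold Rdiv. apply (Rmult_lt_reg_r (K + 1)). lra.
    rewrite !Rmult_assoc. rewrite (Rmult_comm K (K+1)), <- Rmult_assoc with (r2 := (K+1)), Rinv_l by lra. nra. }
  lra.
Qed.

Definition badw (p : Sigma) (s : list bool) : R := indP (~ exists q, in_orbit p q /\ prefix s q).

Definition emp (w : Sigma) (N : nat) (s : list bool) : R :=
  / INR N * sumN N (fun i => indP (prefix s (shiftn i w))).

Lemma sumN_ind_le N (P : nat -> Prop) : 0 <= sumN N (fun i => indP (P i)) <= INR N.
Proof.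
  split. apply sumN_nonneg; intros; apply indP_01.
  rewrite <- (Rmult_1_r (INR N)), <- sumN_const. apply sumN_le. intros; apply indP_01.
Qed.

Lemma emp_01 w N s : (0 < N)%nat -> 0 <= emp w N s <= 1.
Proof.
  intros HN. unfold emp. pose proof (sumN_ind_le N (fun i => prefix s (shiftn i w))).
  assert (0 < INR N) by (apply lt_0_INR; auto).
  split. apply Rmult_le_pos; [apply Rlt_le, Rinv_0_lt_compat; auto | lra].
  apply (Rmult_le_reg_l (INR N)); auto. rewrite <- Rmult_assoc, Rinv_r by lra. lra.
Qed.

Lemma emp_sum w N n (f : list bool -> R) :
  sumL (words n) (fun s => emp w N s * f s) = / INR N * sumN N (fun i => f (take n (shiftn i w))).
Proof.
  unfold emp.
  rewrite (sumL_ext_in _ _ (fun s => / INR N * sumN N (fun i => indP (prefix s (shiftn i w)) * f s))).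
  2:{ intros s _. rewrite Rmult_assoc. f_equal. rewrite Rmult_comm, <- sumN_scal. apply sumN_ext. intros; ring. }
  rewrite sumL_scal. f_equal. rewrite sumL_sumN. apply sumN_ext. intros i _.
  apply key_sum.
Qed.

Lemma Rstar_sum_bound Astar Vstar w l : calibrated_subaction Astar Vstar ->
  Istar_is Astar Vstar w l -> forall N, 0 <= sumN N (fun i => Rstar Astar Vstar (shiftn i w)) <= l.
Proof.
  intros HV Hl N. pose proof (Rstar_nonneg _ _ HV) as Hnn. split.
  - apply sumN_nonneg. intros; auto.
  - apply Rle_trans with (sumN (S N) (fun i => Rstar Astar Vstar (shiftn i w))).
    + simpl. pose proof (Hnn (shiftn N w)). lra.
    + rewrite sumN_f_R0. apply growing_ineq; auto.
      intros n. simpl. pose proof (Hnn (shiftn (S n) w)). lra.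
Qed.

Lemma Astar_sum Astar Vstar w N :
  sumN N (fun i => Astar (shiftn i w)) =
  Vstar (shiftn N w) - Vstar w - sumN N (fun i => Rstar Astar Vstar (shiftn i w)).
Proof.
  rewrite <- (shiftn_0 w) at 2.
  rewrite <- (sumN_telescope N (fun i => Vstar (shiftn i w))).
  rewrite <- sumN_minus. apply sumN_ext. intros i _. unfold Rstar.
  rewrite shift_shiftn. ring.
Qed.

Lemma MC (Astar Vstar : Sigma -> R) (p : Sigma) (k : nat) (w : Sigma) :
  Holder Astar -> calibrated_subaction Astar Vstar ->
  (forall mu, maximizing_prob Astar 0 mu -> supported_on mu (in_orbit p)) ->
  Istar_finite Astar Vstar w ->
  forall d N1, 0 < d ->
  ~ (forall N, (N1 <= N)%nat -> d * INR N <= sumN N (fun i => badw p (take k (shiftn i w)))).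
Proof.
  intros HA HV Hsupp [l Hl] d N1 Hd Hbad.
  set (u := fun j s => emp w (j + N1 + 1) s).
  destruct (diag u) as [D [HD HDl]]. { intros j s. apply emp_01. lia. }
  set (nu := fun s => proj1_sig (constructive_indefinite_description _ (HDl s))).
  assert (nuP : forall s, Un_cv (fun j => u (D j) s) (nu s)).
  { intros s. unfold nu. destruct (constructive_indefinite_description _ _). auto. }
  set (NN := fun j => (D j + N1 + 1)%nat).
  assert (HNN : forall j, 0 < INR (NN j)) by (intros; apply lt_0_INR; unfold NN; lia).
  assert (Hprob : is_probability nu).
  { split; [|split].
    - apply (UL_sequence (fun j => u (D j) [])); auto.
      replace (fun j => u (D j) []) with (fun _ : nat => 1). apply cv_const.
      apply functional_extensionality; intro j. unfold u, emp.
      rewrite (sumN_ext _ _ (fun _ => 1)). rewrite sumN_const. field.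
      apply Rgt_not_eq, HNN. intros i _. apply indP_true. intros m Hm. simpl in Hm. lia.
    - intros s. apply (lim_le (fun _ => 0) (fun j => u (D j) s)); auto. apply cv_const.
      intros j. apply emp_01. lia.
    - intros s. apply (UL_sequence (fun j => u (D j) s)); auto.
      replace (fun j => u (D j) s) with (fun j => u (D j) (s ++ [false]) + u (D j) (s ++ [true])).
      apply CV_plus; auto.
      apply functional_extensionality; intro j. unfold u, emp. rewrite <- Rmult_plus_distr_l.
      f_equal. rewrite <- sumN_plus. apply sumN_ext. intros. symmetry. apply indP_prefix_split. }
  assert (Hinv : forall s, nu s = nu (false :: s) + nu (true :: s)).
  { intros s.
    assert (Hc : Un_cv (fun j => u (D j) s - (u (D j) (false :: s) + u (D j) (true :: s))) 0).
    { replace (fun j => u (D j) s - (u (D j) (false :: s) + u (D j) (true :: s))) with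
        (fun j => / INR (D j + N1 + 1) * (indP (prefix s (shiftn 0 w)) - indP (prefix s (shiftn (D j + N1 + 1) w)))).
      - apply (cv_scale_inv D N1 _ 1 HD). intros j.
        pose proof (indP_01 (prefix s (shiftn 0 w))). pose proof (indP_01 (prefix s (shiftn (D j + N1 + 1) w))).
        apply Rabs_le. lra.
      - apply functional_extensionality; intro j. unfold u, emp.
        set (M := (D j + N1 + 1)%nat).
        rewrite <- Rmult_plus_distr_l, <- Rmult_minus_distr_l. f_equal.
        rewrite <- sumN_plus.
        rewrite (sumN_ext _ (fun i => indP (prefix (false :: s) (shiftn i w)) + indP (prefix (true :: s) (shiftn i w))) (fun i => indP (prefix s (shiftn (S i) w)))).
        2:{ intros i _. rewrite indP_prefix_cons. rewrite shift_shiftn. reflexivity. }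
        pose proof (sumN_shift M (fun i => indP (prefix s (shiftn i w)))). simpl sumN in H at 1.
        lra. }
    pose proof (CV_minus _ _ _ _ (nuP s) (CV_plus _ _ _ _ (nuP (false :: s)) (nuP (true :: s)))) as H2.
    pose proof (UL_sequence _ _ _ Hc H2). lra. }
  destruct (cont_bounded Vstar (proj1 HV)) as [B HB].
  assert (Havg : Un_cv (fun j => / INR (NN j) * sumN (NN j) (fun i => Astar (shiftn i w))) 0).
  { apply (cv_scale_inv D N1 _ (2 * B + l) HD). intros j.
    rewrite (Astar_sum Astar Vstar). pose proof (Rstar_sum_bound _ _ _ _ HV Hl (NN j)).
    pose proof (HB (shiftn (NN j) w)). pose proof (HB w).
    apply Rabs_le_inv in H0. apply Rabs_le_inv in H1. apply Rabs_le. lra. }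
  assert (Hint : integral_is nu Astar 0).
  { intros eps He. destruct (holder_eps Astar HA (eps/2) ltac:(lra)) as [n0 Hn0].
    exists n0. intros n Hn. unfold Rdist. rewrite Rminus_0_r.
    assert (Hrs : Un_cv (fun j => sumL (words n) (fun s => u (D j) s * Astar (ext s))) (riemann_sum nu Astar n)).
    { apply sumL_cv. intros s _. apply CV_mult; auto. apply cv_const. }
    assert (Rabs (riemann_sum nu Astar n - 0) <= eps / 2).
    { apply (lim_bound _ _ _ _ _ Hrs Havg). intros j. unfold u.
      rewrite (emp_sum w _ n (fun s => Astar (ext s))). fold (NN j).
      rewrite <- Rmult_minus_distr_l, <- sumN_minus.
      assert (Hb : forall i, Rabs (Astar (ext (take n (shiftn i w))) - Astar (shiftn i w)) <= eps / 2).
      { intros i. apply Rlt_le. apply (Hn0 n); auto. intros m Hm. unfold ext. apply take_nth; auto. }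
      assert (Hs : Rabs (sumN (NN j) (fun i => Astar (ext (take n (shiftn i w))) - Astar (shiftn i w))) <= INR (NN j) * (eps/2)).
      { apply Rabs_le. split.
        - pose proof (sumN_le (NN j) (fun _ => - (eps/2)) (fun i => Astar (ext (take n (shiftn i w))) - Astar (shiftn i w))) as Hq.
          rewrite sumN_const in Hq. assert (forall i, - (eps/2) <= Astar (ext (take n (shiftn i w))) - Astar (shiftn i w)) as Hq'.
          { intros i. specialize (Hb i). apply Rabs_le_inv in Hb. lra. }
          specialize (Hq Hq'). lra.
        - pose proof (sumN_le (NN j) (fun i => Astar (ext (take n (shiftn i w))) - Astar (shiftn i w)) (fun _ => (eps/2))) as Hq.
          rewrite sumN_const in Hq. assert (forall i, Astar (ext (take n (shiftn i w))) - Astar (shiftn i w) <= eps/2) as Hq'.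
          { intros i. specialize (Hb i). apply Rabs_le_inv in Hb. lra. }
          specialize (Hq Hq'). lra. }
      rewrite Rabs_mult. rewrite Rabs_right by (apply Rle_ge, Rlt_le, Rinv_0_lt_compat, HNN).
      apply (Rmult_le_reg_l (INR (NN j))). apply HNN.
      rewrite <- Rmult_assoc, Rinv_r by (apply Rgt_not_eq, HNN). lra. }
    rewrite Rminus_0_r in *; lra. }
  assert (Hmax : maximizing_prob Astar 0 nu) by (split; [split; auto | auto]).
  specialize (Hsupp nu Hmax).
  assert (Hmass : d <= sumL (words k) (fun s => nu s * badw p s)).
  { apply (lim_le (fun _ => d) (fun j => sumL (words k) (fun s => u (D j) s * badw p s))).
    apply cv_const. apply sumL_cv. intros s _. apply CV_mult; auto. apply cv_const.
    intros j. unfold u. rewrite (emp_sum w _ k (badw p)). fold (NN j).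
    specialize (Hbad (NN j) ltac:(unfold NN; lia)).
    apply (Rmult_le_reg_l (INR (NN j))). apply HNN.
    rewrite <- Rmult_assoc, Rinv_r by (apply Rgt_not_eq, HNN). lra. }
  destruct (sumL_pos_exists (words k) (fun s => nu s * badw p s)) as [s [_ Hs]]. lra.
  unfold badw in Hs.
  destruct (classic (exists q, in_orbit p q /\ prefix s q)) as [Hq|Hq].
  - rewrite indP_false in Hs by tauto. lra.
  - rewrite indP_true in Hs by auto. destruct (Hsupp s) as [z Hz]. lra. apply Hq. exists z. tauto.
Qed.

Lemma good_point Astar Vstar (p : Sigma) : Holder Astar -> continuous_S Vstar ->
  forall x, exists c n, 0 < c /\
   (0 < Rstar Astar Vstar x -> forall z, agree n z x -> c <= Rstar Astar Vstar z).
Proof.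
  intros HA HV x.
  destruct (classic (0 < Rstar Astar Vstar x)) as [Hp|Hp].
  - destruct (Rstar_cont Astar Vstar HA HV x (Rstar Astar Vstar x / 2) ltac:(lra)) as [n Hn].
    exists (Rstar Astar Vstar x / 2), n. split. lra. intros _ z Hz. specialize (Hn z Hz).
    apply Rabs_def2 in Hn. lra.
  - exists 1, 0%nat. split. lra. intros H. tauto.
Qed.

Lemma P_lemma Astar Vstar p per : Holder Astar -> continuous_S Vstar -> periodic p per ->
  (forall w, ~ in_orbit p w -> in_orbit p (shift w) -> 0 < Rstar Astar Vstar w) ->
  exists c n0, 0 < c /\ forall z q b, in_orbit p q -> ~ in_orbit p (cons_sym b q) ->
     agree n0 z (cons_sym b q) -> c <= Rstar Astar Vstar z.
Proof.
  intros HA HV Hper Hgood.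
  assert (Hfin : forall m, exists c n0, 0 < c /\ forall a b z, (a < m)%nat ->
     ~ in_orbit p (cons_sym b (shiftn a p)) -> agree n0 z (cons_sym b (shiftn a p)) -> c <= Rstar Astar Vstar z).
  { induction m.
    - exists 1, 0%nat. split. lra. intros; lia.
    - destruct IHm as [c [n [Hc H]]].
      destruct (good_point Astar Vstar p HA HV (cons_sym false (shiftn m p))) as [c1 [n1 [Hc1 H1]]].
      destruct (good_point Astar Vstar p HA HV (cons_sym true (shiftn m p))) as [c2 [n2 [Hc2 H2]]].
      exists (Rmin c (Rmin c1 c2)), (n + n1 + n2)%nat.
      split. { apply Rmin_pos; auto. apply Rmin_pos; auto. }
      intros a b z Ha Hno Hag.
      pose proof (Rmin_l c (Rmin c1 c2)). pose proof (Rmin_r c (Rmin c1 c2)).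
      pose proof (Rmin_l c1 c2). pose proof (Rmin_r c1 c2).
      destruct (Nat.lt_ge_cases a m) as [Ham|Ham].
      + specialize (H a b z Ham Hno (agree_mono (n + n1 + n2) n _ _ ltac:(lia) Hag)). lra.
      + assert (a = m) by lia. subst a.
        assert (Hsh : in_orbit p (shift (cons_sym b (shiftn m p)))) by (rewrite shift_cons; apply orbit_of).
        destruct b.
        * assert (c2 <= Rstar Astar Vstar z).
          { apply H2; auto.
            apply (agree_mono (n + n1 + n2) n2 _ _ ltac:(lia) Hag). }
          lra.
        * assert (c1 <= Rstar Astar Vstar z).
          { apply H1; auto.
            apply (agree_mono (n + n1 + n2) n1 _ _ ltac:(lia) Hag). }
          lra. }
  destruct (Hfin per) as [c [n0 [Hc H]]]. exists c, n0. split; auto.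
  intros z q b Hq Hno Hag. destruct (orbit_mod p per q Hper Hq) as [a [Ha ->]].
  apply (H a b z); auto.
Qed.

Lemma terms_to_zero (f : nat -> R) l : infinite_sum f l ->
  forall eps, 0 < eps -> exists T, forall t, (T <= t)%nat -> Rabs (f t) < eps.
Proof.
  intros H eps He. destruct (H (eps/2) ltac:(lra)) as [N HN]. exists (S N). intros t Ht.
  destruct t as [|t']. lia.
  pose proof (HN (S t') ltac:(lia)). pose proof (HN t' ltac:(lia)).
  unfold Rdist in *. simpl sum_f_R0 in H0.
  apply Rabs_def2 in H0. apply Rabs_def2 in H1. apply Rabs_def1; lra.
Qed.

Lemma badw_U p k z : ~ U p k z -> badw p (take k z) = 1.
Proof.
  intros H. unfold badw. apply indP_true. intros [q [Hq Hp]]. apply H.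
  exists q. split; auto. apply prefix_take; auto.
Qed.

Lemma ML Astar Vstar p per w : Holder Astar -> calibrated_subaction Astar Vstar -> periodic p per ->
  (forall w, ~ in_orbit p w -> in_orbit p (shift w) -> 0 < Rstar Astar Vstar w) ->
  (forall mu, maximizing_prob Astar 0 mu -> supported_on mu (in_orbit p)) ->
  Istar_finite Astar Vstar w -> exists N, in_orbit p (shiftn N w).
Proof.
  intros HA HV Hper Hgood Hsupp Hfin.
  apply NNPP. intros Hno.
  set (k := S per).
  assert (Hk : (per < k)%nat) by (unfold k; lia).
  assert (Hinf : forall N, exists t, (N <= t)%nat /\ ~ U p k (shiftn t w)).
  { intros N. apply NNPP. intros Hn. apply Hno. exists N.
    apply (eventually_U_orbit p per k w N Hper Hk). intros i Hi.
    apply NNPP. intros Hu. apply Hn. exists i. auto. }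
  destruct (P_lemma Astar Vstar p per HA (proj1 HV) Hper Hgood) as [c [n0 [Hc HP]]].
  destruct Hfin as [l Hl].
  destruct (terms_to_zero _ _ Hl c Hc) as [T HT].
  assert (Hgap : forall t, (T <= t)%nat -> ~ U p k (shiftn t w) ->
             exists t', (t < t' <= t + n0 + 1)%nat /\ ~ U p k (shiftn t' w)).
  { intros t Ht Hnu. apply NNPP. intros Hn.
    assert (HU : forall i, (i <= n0)%nat -> U p k (shiftn i (shiftn (S t) w))).
    { intros i Hi. rewrite shiftn_shiftn. apply NNPP. intros Hu. apply Hn.
      exists (S t + i)%nat. split; auto. lia. }
    destruct (HU 0%nat ltac:(lia)) as [q [Hq Hzq]]. rewrite shiftn_0 in Hzq.
    pose proof (shadow p per k Hper Hk n0 _ q Hq Hzq HU) as Hsh.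
    set (zs := cons_sym (shiftn t w 0%nat) q).
    assert (Hag : agree (S (n0 + k)) (shiftn t w) zs).
    { intros [|j] Hj. reflexivity. unfold zs. simpl.
      rewrite <- (Hsh j ltac:(lia)). unfold shiftn. f_equal. lia. }
    assert (Hzs : ~ in_orbit p zs).
    { intros Hin. apply Hnu. exists zs. split; auto.
      apply (agree_mono (S (n0 + k))); auto. lia. }
    pose proof (HP (shiftn t w) q (shiftn t w 0%nat) Hq Hzs (agree_mono (S (n0 + k)) n0 _ _ ltac:(lia) Hag)).
    specialize (HT t Ht). apply Rabs_def2 in HT. lra. }
  destruct (Hinf T) as [t0 [Ht0 Hnu0]].
  set (cnt := fun N => sumN N (fun i => badw p (take k (shiftn i w)))).
  assert (Hb01 : forall i, 0 <= badw p (take k (shiftn i w)) <= 1) by (intros; apply indP_01).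
  assert (Hcnt : forall m, exists t, (t0 <= t <= t0 + m * (n0 + 1))%nat /\ ~ U p k (shiftn t w) /\
                   INR (S m) <= cnt (S t)).
  { induction m.
    - exists t0. split. lia. split; auto. unfold cnt. simpl sumN. rewrite badw_U by auto.
      pose proof (sumN_nonneg t0 _ (fun i => proj1 (Hb01 i))). simpl. lra.
    - destruct IHm as [t [Ht [Hnu Hc']]].
      destruct (Hgap t ltac:(lia) Hnu) as [t' [Ht' Hnu']].
      exists t'. split. nia. split; auto. unfold cnt in *. simpl sumN. rewrite badw_U by auto.
      pose proof (sumN_mono (S t) t' _ (fun i => proj1 (Hb01 i)) ltac:(lia)).
      rewrite S_INR. lra. }
  apply (MC Astar Vstar p k w HA HV Hsupp (ex_intro _ l Hl) (/ (2 * (INR n0 + 1))) (2 * t0 + 1)%nat).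
  { apply Rinv_0_lt_compat. pose proof (pos_INR n0). lra. }
  intros N HN.
  set (m := ((N - t0 - 1) / (n0 + 1))%nat).
  destruct (Hcnt m) as [t [Ht [_ Hc']]].
  assert (Hm1 : (m * (n0 + 1) <= N - t0 - 1)%nat).
  { unfold m. rewrite Nat.mul_comm. apply Nat.Div0.mul_div_le. }
  assert (Hm2 : (N - t0 - 1 < (n0 + 1) * S m)%nat).
  { unfold m. apply Nat.mul_succ_div_gt. lia. }
  assert (Hc2 : cnt (S t) <= cnt N).
  { apply sumN_mono. intros; apply Hb01. lia. }
  assert (HNle : (N <= 2 * ((n0 + 1) * S m))%nat) by lia.
  apply le_INR in HNle. rewrite mult_INR, mult_INR, plus_INR, S_INR in HNle. replace (INR 2) with 2 in HNle by (simpl; lra). replace (INR 1) with 1 in HNle by (simpl; lra).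
  fold (cnt N).
  assert (Hpos : 0 < 2 * (INR n0 + 1)) by (pose proof (pos_INR n0); lra).
  apply (Rmult_le_reg_l (2 * (INR n0 + 1))); auto.
  rewrite <- Rmult_assoc, Rinv_r by lra. rewrite Rmult_1_l.
  assert (INR (S m) <= cnt N) by lra.
  assert (2 * (INR n0 + 1) * INR (S m) <= 2 * (INR n0 + 1) * cnt N) by (apply Rmult_le_compat_l; lra).
  lra.
Qed.

Theorem mainTheorem7
  (A Astar V Vstar : Sigma -> R) (W : Sigma -> Sigma -> R) (p : Sigma) (per : nat)
  (HA : Holder A) (HAstar : Holder Astar)
  (HW : involution_kernel A Astar W)
  (HmA : max_ergodic_value A 0) (HmAstar : max_ergodic_value Astar 0)
  (HV : calibrated_subaction A V) (HVstar : calibrated_subaction Astar Vstar)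
  (HWnorm : W_normalized Astar V Vstar W)
  (Hper : periodic p per)
  (Hmax_ex : exists mu, maximizing_prob Astar 0 mu)
  (Hmax_uniq : forall mu1 mu2, maximizing_prob Astar 0 mu1 ->
                 maximizing_prob Astar 0 mu2 -> forall s, mu1 s = mu2 s)
  (Hmax_supp : forall mu, maximizing_prob Astar 0 mu -> supported_on mu (in_orbit p))
  (Hgood : forall w, ~ in_orbit p w -> in_orbit p (shift w) ->
             0 < Rstar Astar Vstar w) :
  countable_set (Istar_finite Astar Vstar) /\
  countable_set (fun w => exists x, optimal_pair Astar V Vstar W x w).
Proof.
  assert (Hev : forall w, Istar_finite Astar Vstar w -> exists N a, shiftn N w = shiftn a p).
  { intros w Hw. destruct (ML Astar Vstar p per w HAstar HVstar Hper Hgood Hmax_supp Hw) as [N HN].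
    destruct (orbit_eq _ _ HN) as [a Ha]. exists N, a. exact Ha. }
  split.
  - apply (countable_eventually p per). exact (proj2 Hper). exact Hev.
  - apply (countable_eventually p per). exact (proj2 Hper).
    intros w [x [l [Hl _]]]. apply Hev. exists l. exact Hl.
Qed.
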